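(* Let $X$ be a $T_1$ space and $\mathcal{P}$ an ideal of closed subsets of $X$ containing every singleton subset of $X$. Then: (1) a nonzero ideal $I$ of $C(X)_\mathcal{P}$ is minimal if and only if there exists $\alpha\in X$ with $I=\langle\chi_{\{\alpha\}}\rangle$, if and only if $|Z_\mathcal{P}[I]|=2$; (2) the socle of $C(X)_\mathcal{P}$ consists exactly of the functions in $C(X)_\mathcal{P}$ that vanish everywhere except on a finite set; (3) the socle of $C(X)_\mathcal{P}$ is an essential ideal and is free.
   Context: An ideal of closed subsets of $X$ is a family $\mathcal{P}$ of closed subsets closed under finite unions and under passing to closed subsets. $D_f$ is the set of discontinuity points of $f\in\mathbb{R}^X$; $C(X)_\mathcal{P}=\{f\in\mathbb{R}^X\colon\overline{D_f}\in\mathcal{P}\}$, a commutative ring with pointwise operations. $\chi_A$ denotes the characteristic function of $A$. For $f\in C(X)_\mathcal{P}$, $Z_\mathcal{P}(f)=\{x\colon f(x)=0\}$ and $Z_\mathcal{P}[I]=\{Z_\mathcal{P}(f)\colon f\in I\}$. The socle is the sum of all minimal ideals. An ideal is essential if it meets every nonzero ideal nontrivially; an ideal $I$ is free if $\bigcap Z_\mathcal{P}[I]=\emptyset$. *)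

(* Defs.v *)
From HB Require Import structures.
From mathcomp Require Import all_boot all_order all_algebra.
From mathcomp Require Import all_classical all_reals all_analysis.
Set Implicit Arguments. Unset Strict Implicit. Unset Printing Implicit Defensive.
Import Order.TTheory GRing.Theory Num.Theory numFieldNormedType.Exports.
Local Open Scope classical_set_scope.
Local Open Scope ring_scope.

Section Defs.
Context {R : realType} {X : topologicalType}.

Definition closed_ideal (P : set (set X)) : Prop :=
  [/\ P set0,
      (forall A, P A -> closed A),
      (forall A B, P A -> P B -> P (A `|` B)) &
      (forall A B, P A -> closed B -> B `<=` A -> P B)].

Definition discont (f : X -> R) : set X := [set x : X | ~ {for x, continuous f}].

Definition CP (P : set (set X)) (f : X -> R) : Prop := P (closure (discont f)).

Definition zerof : X -> R := fun _ => 0.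

Definition ideal (P : set (set X)) (I : set (X -> R)) : Prop :=
  [/\ I `<=` CP P,
      I zerof,
      (forall f g, I f -> I g -> I (fun x => f x + g x)),
      (forall f, I f -> I (fun x => - f x)) &
      (forall f g, CP P g -> I f -> I (fun x => g x * f x))].

Definition nonzero_ideal (I : set (X -> R)) : Prop := exists2 f, I f & f <> zerof.

Definition minimal_ideal (P : set (set X)) (I : set (X -> R)) : Prop :=
  [/\ ideal P I, nonzero_ideal I &
      forall J, ideal P J -> nonzero_ideal J -> J `<=` I -> J = I].

Definition chi (A : set X) : X -> R := fun x => if `[< A x >] then 1 else 0.

Definition principal (P : set (set X)) (h : X -> R) : set (X -> R) :=
  [set f | exists2 g, CP P g & f = (fun x => g x * h x)].

Definition ZP (f : X -> R) : set X := [set x | f x = 0].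
Definition ZPI (I : set (X -> R)) : set (set X) := [set ZP f | f in I].

Definition fsum (s : seq (X -> R)) : X -> R :=
  foldr (fun g h x => g x + h x) zerof s.

(* socle: sum of all minimal ideals = finite sums of elements of minimal ideals *)
Definition socle (P : set (set X)) : set (X -> R) :=
  [set f | exists s : seq (X -> R),
      (forall g, g \in s -> exists2 I, minimal_ideal P I & I g) /\ f = fsum s].

Definition essential_ideal (P : set (set X)) (I : set (X -> R)) : Prop :=
  ideal P I /\
  forall J, ideal P J -> nonzero_ideal J -> exists2 f, (I `&` J) f & f <> zerof.

Definition free_ideal (I : set (X -> R)) : Prop := \bigcap_(Z in ZPI I) Z = set0.

End Defs.

(* Main.v *)
Require Import Defs.
From mathcomp Require Import all_boot all_order all_algebra.
From mathcomp Require Import all_classical all_reals all_analysis.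
Local Open Scope classical_set_scope.
Local Open Scope ring_scope.
Import Order.TTheory GRing.Theory Num.Theory numFieldNormedType.Exports.

Lemma discont_sub (R : realType) (X : topologicalType) (f g h : X -> R) :
  (forall x : X, {for x, continuous f} -> {for x, continuous g} ->
     {for x, continuous h}) ->
  discont h `<=` discont f `|` discont g.
Proof.
move=> H x; rewrite /discont /= => nh; apply/not_andP => -[cf cg].
exact: nh (H x cf cg).
Qed.

Lemma CP_comb (R : realType) (X : topologicalType) (P : set (set X))
  (f g h : X -> R) : closed_ideal P ->
  (forall x : X, {for x, continuous f} -> {for x, continuous g} ->
     {for x, continuous h}) ->
  CP P f -> CP P g -> CP P h.
Proof.
case=> P0 Pcl PU PS H; rewrite /CP => Pf Pg.
apply: (PS (closure (discont f) `|` closure (discont g))).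
- exact: PU.
- exact: closed_closure.
rewrite -closureU; apply: closureS; exact: discont_sub.
Qed.

Lemma CP_add (R : realType) (X : topologicalType) (P : set (set X))
  (f g : X -> R) : closed_ideal P -> CP P f -> CP P g ->
  CP P (fun x => f x + g x).
Proof.
move=> hP; apply: (@CP_comb R X P f g _ hP) => x cf cg.
exact: continuousD cf cg.
Qed.

Lemma CP_mul (R : realType) (X : topologicalType) (P : set (set X))
  (f g : X -> R) : closed_ideal P -> CP P f -> CP P g ->
  CP P (fun x => f x * g x).
Proof.
move=> hP; apply: (@CP_comb R X P f g _ hP) => x cf cg.
exact: continuousM cf cg.
Qed.

Lemma CP_neg (R : realType) (X : topologicalType) (P : set (set X))
  (f : X -> R) : closed_ideal P -> CP P f -> CP P (fun x => - f x).
Proof.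
move=> hP Cf; apply: (@CP_comb R X P f f _ hP) => // x cf _.
exact: continuousN cf.
Qed.

Lemma CP_cst (R : realType) (X : topologicalType) (P : set (set X))
  (c : R) : closed_ideal P -> CP P (fun _ : X => c).
Proof.
case=> P0 _ _ _; rewrite /CP.
have -> : discont (fun _ : X => c) = set0.
  apply/funext => x; apply/propext; split => // H; apply: H.
  exact: cst_continuous.
by rewrite closure0.
Qed.

Lemma chi_a (R : realType) (X : topologicalType) (a : X) :
  @chi R X [set a] a = 1.
Proof. by rewrite /chi asboolT. Qed.

Lemma chi_n (R : realType) (X : topologicalType) (a x : X) :
  x <> a -> @chi R X [set a] x = 0.
Proof. by move=> xa; rewrite /chi asboolF. Qed.

Lemma chi_mulx (R : realType) (X : topologicalType) (a x : X) (f : X -> R) :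
  chi [set a] x * f x = f a * chi [set a] x.
Proof.
have [->|xa] := eqVneq x a; first by rewrite chi_a mul1r mulr1.
by rewrite chi_n ?mul0r ?mulr0 //; apply/eqP.
Qed.

Lemma CP_chi (R : realType) (X : topologicalType) (P : set (set X)) (a : X) :
  accessible_space X -> closed_ideal P -> (forall a : X, P [set a]) ->
  CP P (@chi R X [set a]).
Proof.
move=> hX [P0 Pcl PU PS] h1; rewrite /CP.
apply: (PS [set a]); [exact: h1 | exact: closed_closure|].
rewrite [X in _ `<=` X](closure_id _).1; last exact: accessible_closed_set1.
apply: closureS => x; rewrite /discont /= => nc.
apply: contrapT => xa; apply: nc.
change (@chi R X [set a] y @[y --> x] --> chi [set a] x); rewrite chi_n //.
apply: cvg_near_cst.
have : nbhs x (~` [set a]).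
  apply: open_nbhs_nbhs; split => //.
  exact/closed_openC/accessible_closed_set1.
by apply: filterS => y /= ya; rewrite chi_n.
Qed.

Lemma nz_pt (R : realType) (X : topologicalType) (f : X -> R) :
  f <> zerof -> exists a, f a != 0.
Proof.
move=> nf; apply: contrapT => H; apply: nf; apply/funext => x.
rewrite /zerof; apply/eqP; apply/negPn/negP => fx; apply: H; by exists x.
Qed.

Arguments nz_pt {R X f}.
Arguments chi_n {R X a x}.

Lemma chi_ideal (R : realType) (X : topologicalType) (P : set (set X))
  (I : set (X -> R)) (f : X -> R) (a : X) :
  accessible_space X -> closed_ideal P -> (forall a : X, P [set a]) ->
  ideal P I -> I f -> f a != 0 -> I (chi [set a]).
Proof.
move=> hX hP h1 [_ _ _ _ Imul] If fa.
have -> : chi [set a] = (fun x => ((f a)^-1 * chi [set a] x) * f x).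
  apply/funext => x; rewrite -mulrA chi_mulx mulKf //.
apply: Imul If; apply: CP_mul => //; first exact: CP_cst.
exact: CP_chi.
Qed.
Arguments chi_ideal {R X P I f a}.

Lemma principal_ideal (R : realType) (X : topologicalType) (P : set (set X))
  (a : X) :
  accessible_space X -> closed_ideal P -> (forall a : X, P [set a]) ->
  ideal P (principal P (@chi R X [set a])).
Proof.
move=> hX hP h1; split.
- move=> f [g Cg ->]; apply: CP_mul => //; exact: CP_chi.
- exists (fun _ => 0); first exact: CP_cst.
  by apply/funext => x; rewrite mul0r.
- move=> f g [f' Cf ->] [g' Cg ->]; exists (fun x => f' x + g' x).
    exact: CP_add.
  by apply/funext => x; rewrite mulrDl.
- move=> f [f' Cf ->]; exists (fun x => - f' x); first exact: CP_neg.
  by apply/funext => x; rewrite mulNr.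
- move=> f h Ch [g Cg ->]; exists (fun x => h x * g x); first exact: CP_mul.
  by apply/funext => x; rewrite mulrA.
Qed.

Lemma principal_chi (R : realType) (X : topologicalType) (P : set (set X))
  (a : X) : closed_ideal P ->
  principal P (@chi R X [set a]) (chi [set a]).
Proof.
move=> hP; exists (fun _ => 1); first exact: CP_cst.
by apply/funext => x; rewrite mul1r.
Qed.

Lemma chi_nz (R : realType) (X : topologicalType) (a : X) :
  @chi R X [set a] <> zerof.
Proof.
move/(congr1 (fun f => f a)); rewrite /zerof chi_a => /eqP.
by rewrite oner_eq0.
Qed.

Lemma principal_sub (R : realType) (X : topologicalType) (P : set (set X))
  (I : set (X -> R)) (a : X) :
  ideal P I -> I (chi [set a]) -> principal P (chi [set a]) `<=` I.
Proof. by move=> [_ _ _ _ Im] Ic f [g Cg ->]; exact: Im. Qed.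
Arguments principal_sub {R X P I a}.

Lemma principal_elem (R : realType) (X : topologicalType) (P : set (set X))
  (a : X) (f : X -> R) :
  principal P (chi [set a]) f -> f = (fun x => f a * chi [set a] x).
Proof.
move=> [g Cg ->]; apply/funext => x.
by rewrite chi_a mulr1 mulrC chi_mulx.
Qed.
Arguments principal_elem {R X P a f}.

Lemma principal_minimal (R : realType) (X : topologicalType)
  (P : set (set X)) (a : X) :
  accessible_space X -> closed_ideal P -> (forall a : X, P [set a]) ->
  minimal_ideal P (principal P (@chi R X [set a])).
Proof.
move=> hX hP h1; split; first exact: principal_ideal.
  by exists (chi [set a]); [exact: principal_chi | exact: chi_nz].
move=> J hJ [f Jf fnz] JI.
have [b fb] := nz_pt fnz.
have ba : b = a.
  apply: contrapT => ba; move: fb; rewrite (principal_elem (JI _ Jf)).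
  by rewrite chi_n // mulr0 eqxx.
subst b.
apply/seteqP; split => //.
exact: principal_sub hJ (chi_ideal hX hP h1 hJ Jf fb).
Qed.

Lemma minimal_principal (R : realType) (X : topologicalType)
  (P : set (set X)) (I : set (X -> R)) :
  accessible_space X -> closed_ideal P -> (forall a : X, P [set a]) ->
  minimal_ideal P I -> exists a, I = principal P (chi [set a]).
Proof.
move=> hX hP h1 [hI [f If fnz] Hmin].
have [a fa] := nz_pt fnz; exists a; symmetry; apply: Hmin.
- exact: principal_ideal.
- by exists (chi [set a]); [exact: principal_chi | exact: chi_nz].
- exact: principal_sub hI (chi_ideal hX hP h1 hI If fa).
Qed.

Arguments minimal_principal {R X P I}.
Arguments principal_minimal {R X P}.
Arguments principal_ideal {R X P}.
Lemma ZP_zero (R : realType) (X : topologicalType) :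
  ZP (@zerof R X) = setT.
Proof. by apply/funext => y; apply/propext; split. Qed.

Lemma ZP_chi (R : realType) (X : topologicalType) (a : X) :
  ZP (@chi R X [set a]) = ~` [set a].
Proof.
apply/funext => y; apply/propext; rewrite /ZP /=; split.
  by move=> H ya; move: H; rewrite ya chi_a => /eqP; rewrite oner_eq0.
by move=> ya; rewrite chi_n.
Qed.

Lemma setT_neq (X : topologicalType) (a : X) : setT <> ~` [set a].
Proof. move=> H; have : (~` [set a]) a by rewrite -H. by apply. Qed.

Lemma ZPI_principal (R : realType) (X : topologicalType) (P : set (set X))
  (a : X) : closed_ideal P ->
  ZPI (principal P (@chi R X [set a])) = [set setT; ~` [set a]].
Proof.
move=> hP; apply/seteqP; split.
- move=> Z [f Pf <-]; rewrite (principal_elem Pf).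
  have [fa0|fa0] := eqVneq (f a) 0.
    left; rewrite fa0 /=; apply/funext => y; apply/propext; split => //.
    by rewrite /ZP /= mul0r.
  right => /=; rewrite -(@ZP_chi R X a); apply/funext => y; apply/propext.
  rewrite /ZP /=; split; last by move=> ->; rewrite mulr0.
  by move/eqP; rewrite mulf_eq0 (negbTE fa0) /= => /eqP.
- move=> Z [->|->].
    exists zerof; last exact: ZP_zero.
    exists (fun _ => 0); first exact: CP_cst.
    by apply/funext => x; rewrite mul0r.
  exists (chi [set a]); first exact: principal_chi.
  exact: ZP_chi.
Qed.

Lemma ZPI_minimal (R : realType) (X : topologicalType)
  (P : set (set X)) (I : set (X -> R)) :
  accessible_space X -> closed_ideal P -> (forall a : X, P [set a]) ->
  ideal P I -> nonzero_ideal I ->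
  (exists A B : set X, A <> B /\ ZPI I = [set A; B]) ->
  exists a, I = principal P (chi [set a]).
Proof.
move=> hX hP h1 hI [f If fnz] [A [B [_ HZ]]].
have [a fa] := nz_pt fnz; exists a.
have Ic := chi_ideal hX hP h1 hI If fa.
apply/seteqP; split; last exact: principal_sub.
move=> h Ih; exists (fun _ => h a); first exact: CP_cst.
apply/funext => x.
have [->|xa] := eqVneq x a; first by rewrite chi_a mulr1.
rewrite chi_n ?mulr0; last exact/eqP.
apply/eqP; apply/negPn/negP => hx.
have Icx := chi_ideal hX hP h1 hI Ih hx.
have H1 : ZPI I setT by exists zerof; [case: hI | exact: ZP_zero].
have H2 : ZPI I (~` [set a]) by exists (chi [set a]) => //; exact: ZP_chi.
have H3 : ZPI I (~` [set x]) by exists (chi [set x]) => //; exact: ZP_chi.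
have N12 := @setT_neq X a; have N13 := @setT_neq X x.
have N23 : ~` [set a] <> ~` [set x].
  move=> E; have : (~` [set x]) a by move=> /= ax; move: xa; rewrite ax eqxx.
  by rewrite -E; apply.
rewrite HZ in H1 H2 H3.
case: H1 => <- in H2 H3 *.
  case: H2 => [E|<-] in H3 *; first by apply: N12.
  by case: H3 => E; [apply: N13 | apply: N23].
case: H2 => [<-|E] in H3 *.
  by case: H3 => E; [apply: N23 | apply: N13].
by apply: N12.
Qed.

Lemma minimal_elem (R : realType) (X : topologicalType)
  (P : set (set X)) (I : set (X -> R)) (g : X -> R) :
  accessible_space X -> closed_ideal P -> (forall a : X, P [set a]) ->
  minimal_ideal P I -> I g -> CP P g /\ finite_set [set x | g x != 0].
Proof.
move=> hX hP h1 hmin Ig; split; first by case: hmin => -[+ _ _ _ _] _ _; apply.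
have [a Ia] := minimal_principal hX hP h1 hmin.
rewrite Ia in Ig.
apply: (sub_finite_set _ (finite_set1 a)) => x /=.
rewrite (principal_elem Ig); apply: contraNP => xa.
by rewrite chi_n ?mulr0.
Qed.
Arguments minimal_elem {R X P I g}.

Lemma supp_add (R : realType) (X : topologicalType) (f g : X -> R) :
  finite_set [set x | f x != 0] -> finite_set [set x | g x != 0] ->
  finite_set [set x | f x + g x != 0].
Proof.
move=> Ff Fg; apply: (sub_finite_set (B := [set x | f x != 0] `|` [set x | g x != 0])).
  move=> x /= H; apply: contrapT => /not_orP [/negP/negPn/eqP f0 /negP/negPn/eqP g0].
  by move: H; rewrite f0 g0 addr0 eqxx.
by rewrite finite_setU.
Qed.

Lemma socle_char (R : realType) (X : topologicalType) (P : set (set X)) :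
  accessible_space X -> closed_ideal P -> (forall a : X, P [set a]) ->
  socle P = [set f : X -> R | CP P f /\ finite_set [set x | f x != 0]].
Proof.
move=> hX hP h1; apply/seteqP; split.
- move=> f [s [Hs ->]]; elim: s Hs => [|g s IH] Hs /=.
    split; first exact: CP_cst.
    apply: (sub_finite_set _ (finite_set0 X)) => x /=.
    by rewrite eqxx.
  have [I hmin Ig] := Hs g (mem_head g s).
  have [Cg Fg] := minimal_elem hX hP h1 hmin Ig.
  have [Cs Fs] : CP P (fsum s) /\ finite_set [set x | fsum s x != 0].
    by apply: IH => h hs; apply: Hs; rewrite in_cons hs orbT.
  split; first exact: CP_add.
  exact: supp_add.
- move=> f [_ /finite_seqP [s Hs]].
  have : [set x | f x != 0] `<=` [set` s] by rewrite Hs.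
  elim: s {Hs} f => [|a s IH] f Hf.
    exists [::]; split => //.
    apply/funext => x /=; rewrite /fsum /= /zerof.
    apply/eqP; apply/negPn/negP => fx.
    by have := Hf x fx.
  pose g := fun x => if x == a then 0 else f x.
  have [s' [Hs' Eg]] : socle P g.
    apply: IH => x /=; rewrite /g; have [->|xa] := eqVneq x a; first by rewrite eqxx.
    move=> fx; move: (Hf x fx); rewrite /= in_cons => /orP [/eqP xa'|//].
    by move: xa; rewrite xa' eqxx.
  exists ((fun x => f a * chi [set a] x) :: s'); split.
    move=> h; rewrite in_cons => /orP [/eqP ->|hs]; last exact: Hs'.
    exists (principal P (chi [set a])); first exact: principal_minimal.
    exists (fun _ => f a) => //; exact: CP_cst.
  apply/funext => x /=; rewrite -Eg /g.
  have [->|xa] := eqVneq x a; first by rewrite chi_a mulr1 addr0.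
  by rewrite chi_n ?mulr0 ?add0r //; apply/eqP.
Qed.

Theorem theorem5p8 (R : realType) (X : topologicalType) (P : set (set X)) :
  accessible_space X -> closed_ideal P -> (forall a : X, P [set a]) ->
  [/\ (forall I : set (X -> R), ideal P I -> nonzero_ideal I ->
         (minimal_ideal P I <-> exists a : X, I = principal P (@chi R X [set a])) /\
         (minimal_ideal P I <-> exists A B : set X, A <> B /\ ZPI I = [set A; B])),
      socle P = [set f : X -> R | CP P f /\ finite_set [set x | f x != 0]],
      essential_ideal P (socle (R:=R) P) &
      free_ideal (socle (R:=R) P)].
Proof.
move=> hX hP h1.
have hS := @socle_char R X P hX hP h1.
have chiS : forall a : X, socle P (@chi R X [set a]).
  move=> a; rewrite hS; split; first exact: CP_chi.
  apply: (sub_finite_set _ (finite_set1 a)) => x /=; apply: contraNP => xa.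
  by rewrite chi_n.
split.
- move=> I hI nzI; split; split.
  + exact: minimal_principal.
  + by move=> [a ->]; exact: principal_minimal.
  + move=> hmin; have [a ->] := minimal_principal hX hP h1 hmin.
    exists setT, (~` [set a]); split; first exact: setT_neq.
    exact: ZPI_principal.
  + move=> HZ; have [a ->] := @ZPI_minimal R X P I hX hP h1 hI nzI HZ.
    exact: principal_minimal.
- exact: hS.
- split.
    rewrite hS; split.
    + by move=> f [].
    + split; first exact: CP_cst.
      by apply: (sub_finite_set _ (finite_set0 X)) => x /=; rewrite eqxx.
    + move=> f g [Cf Ff] [Cg Fg]; split; first exact: CP_add.
      exact: supp_add.
    + move=> f [Cf Ff]; split; first exact: CP_neg.
      by apply: (sub_finite_set _ Ff) => x /=; rewrite oppr_eq0.
    + move=> f g Cf [Cg Fg]; split; first exact: CP_mul.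
      apply: (sub_finite_set _ Fg) => x /=; apply: contraNN => /eqP ->.
      by rewrite mulr0.
  move=> J hJ [f Jf fnz]; have [a fa] := nz_pt fnz.
  exists (chi [set a]); last exact: chi_nz.
  by split; [exact: chiS | exact: chi_ideal hX hP h1 hJ Jf fa].
- apply/seteqP; split => // x Hx.
  have : ZP (@chi R X [set x]) x by apply: Hx; exists (chi [set x]).
  by rewrite /ZP /= chi_a => /eqP; rewrite oner_eq0.
Qed.
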